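(* Let $v_1,\ldots,v_n$ be integers with $v_i\geq 2$, let $Q$ be the $n\times n$ tridiagonal matrix with $Q_{ii}=-v_i$, $Q_{i,i+1}=Q_{i+1,i}=1$ and all other entries $0$, and let $f:\mathbb{R}^n\to\mathbb{R}$, $f(z)=z^TQ^{-1}z$. Let $y=(-v_1+2,\ldots,-v_n+2)$. Then for every $x\in\mathbb{R}^n$ with $|x_i|\leq|y_i|$ for all $i$ and $|x_{i_0}|<|y_{i_0}|$ for at least one index $i_0$, we have $f(x)>f(y)$.
   Context: In the paper $y$ is the vector of rotation numbers of a Legendrian chain of unknots giving a universally tight structure on $L(p,q)$ with $-p/q=[-v_1,\ldots,-v_n]$, and $x$ ranges over rotation vectors of virtually overtwisted structures; the statement above is the purely algebraic content. *)

(* Defs.v *)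
From mathcomp Require Import all_boot all_order all_algebra.
Set Implicit Arguments. Unset Strict Implicit. Unset Printing Implicit Defensive.
Import Order.TTheory GRing.Theory Num.Theory.
Local Open Scope ring_scope.

Definition tridiagQ (R : ringType) (n : nat) (v : 'I_n -> int) : 'M[R]_n :=
  \matrix_(i < n, j < n)
     (if i == j then - (v i)%:~R
      else if (j == i.+1 :> nat) || (i == j.+1 :> nat) then 1 else 0).

Definition quadf (R : comUnitRingType) (n : nat) (v : 'I_n -> int) (z : 'cV[R]_n) : R :=
  (z^T *m invmx (tridiagQ R v) *m z) ord0 ord0.

Definition yvec (R : ringType) (n : nat) (v : 'I_n -> int) : 'cV[R]_n :=
  \col_(i < n) (- (v i)%:~R + 2).

(* Main.v *)
Require Import Defs.
From mathcomp Require Import all_boot all_order all_algebra.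
From mathcomp Require Import ring lra zify.
Set Implicit Arguments. Unset Strict Implicit. Unset Printing Implicit Defensive.
Import Order.TTheory GRing.Theory Num.Theory.
Local Open Scope ring_scope.

Lemma bil_expand (R : comRingType) n (a b : 'cV[R]_n) (M : 'M[R]_n) :
  (a^T *m M *m b) ord0 ord0 = \sum_i \sum_j a i ord0 * M i j * b j ord0.
Proof.
rewrite mxE; under eq_bigr => j _ do rewrite mxE big_distrl /=.
rewrite exchange_big; apply: eq_bigr => i _; apply: eq_bigr => j _.
by rewrite !mxE.
Qed.

Lemma sum_if_eq (R : ringType) (N k : nat) (F : nat -> R) :
  \sum_(0 <= l < N) (if l == k then F l else 0) = if (k < N)%N then F k else 0.
Proof.
elim: N => [|N IH]; first by rewrite big_geq.
rewrite big_nat_recr //= IH.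
case: (ltngtP k N) => [kN|Nk|->].
- have -> : (k < N.+1)%N by lia.
  by rewrite addr0.
- have -> : (k < N.+1)%N = false by lia.
  by rewrite addr0.
- by rewrite ltnSn add0r.
Qed.

Definition zz (R : ringType) n (z : 'cV[R]_n.+1) (k : nat) : R :=
  if (k < n.+1)%N then z (inord k) ord0 else 0.

Definition vv (R : ringType) n (v : 'I_n.+1 -> int) (k : nat) : R :=
  (v (inord k))%:~R.

Lemma rowsum (R : ringType) n (v : 'I_n.+1 -> int) (z : 'cV[R]_n.+1) (i : 'I_n.+1) :
  \sum_j tridiagQ R v i j * z j ord0 =
  - vv R v i * zz z i + zz z i.+1 + (if val i is k.+1 then zz z k else 0).
Proof.
pose c (l : nat) : R := if (i : nat) == l then - vv R v i
   else if (l == i.+1) || ((i : nat) == l.+1) then 1 else 0.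
transitivity (\sum_(j < n.+1) c j * zz z j).
  apply: eq_bigr => j _; rewrite /c /zz ltn_ord inord_val mxE val_eqE /vv inord_val.
  done.
rewrite -(big_mkord xpredT (fun l => c l * zz z l)).
transitivity (\sum_(0 <= l < n.+1) ((if l == i then - vv R v i * zz z i else 0)
   + (if l == i.+1 then zz z l else 0) + (if (i:nat) == l.+1 then zz z l else 0))).
  apply: eq_bigr => l _; rewrite /c.
  case: (eqVneq (i : nat) l) => [<-|h1].
    rewrite ?eqxx.
    have -> : ((i : nat) == i.+1) = false by lia.
    by rewrite !addr0.
  case: (eqVneq l i.+1) => [->|h2] /=.
    have -> : ((i : nat) == i.+2) = false by lia.
    by rewrite mul1r add0r addr0.
  case: (eqVneq (i : nat) l.+1) => [h3|h3] /=.
    by rewrite mul1r !add0r.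
  by rewrite mul0r !addr0.
rewrite !big_split /= sum_if_eq ltn_ord.
rewrite sum_if_eq.
have -> : (if (i.+1 < n.+1)%N then zz z i.+1 else 0) = zz z i.+1.
  by rewrite /zz; case: (i.+1 < n.+1)%N.
congr (_ + _ + _).
clear c; case: i => [[|k] hk] /=.
  by rewrite big1.
under eq_bigr => l _ do rewrite eqSS eq_sym.
rewrite sum_if_eq.
by have -> : (k < n.+1)%N by lia.
Qed.

Lemma qform_eq (R : comRingType) n (v : 'I_n.+1 -> int) (z : 'cV[R]_n.+1) :
  (z^T *m tridiagQ R v *m z) ord0 ord0 =
  \sum_(0 <= k < n.+1) zz z k * (- vv R v k * zz z k + zz z k.+1 +
       (if k is k'.+1 then zz z k' else 0)).
Proof.
rewrite bil_expand big_mkord; apply: eq_bigr => i _.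
rewrite -rowsum big_distrr /=; apply: eq_bigr => j _.
by rewrite /zz ltn_ord inord_val mulrA.
Qed.

Lemma tele (R : comRingType) (g : nat -> R) N :
  \sum_(0 <= k < N) (2 * g k ^+ 2 - 2 * g k * g k.+1) =
  g 0%N ^+ 2 + \sum_(0 <= k < N) (g k - g k.+1) ^+ 2 - g N ^+ 2.
Proof.
elim: N => [|N IH]; first by rewrite !big_geq // addr0 subrr.
rewrite !big_nat_recr //= IH; ring.
Qed.

Lemma qform_neg (R : realFieldType) n (v : 'I_n.+1 -> int)
  (hv : forall i, 2 <= v i) (z : 'cV[R]_n.+1) :
  z != 0 -> (z^T *m tridiagQ R v *m z) ord0 ord0 < 0.
Proof.
move=> nz.
set g := zz z.
have gN : g n.+1 = 0 by rewrite /g /zz ltnn.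
have E : (z^T *m tridiagQ R v *m z) ord0 ord0 =
   - (\sum_(0 <= k < n.+1) (vv R v k - 2) * g k ^+ 2 +
      (g 0%N ^+ 2 + \sum_(0 <= k < n.+1) (g k - g k.+1) ^+ 2)).
  rewrite qform_eq -/g.
  have P1 : \sum_(0 <= k < n.+1) g k * (if k is k'.+1 then g k' else 0) =
            \sum_(0 <= k < n.+1) g k * g k.+1.
    rewrite big_nat_recl // big_nat_recr //= gN !mulr0 add0r addr0.
    by apply: eq_bigr => k _; rewrite mulrC.
  have P2 := tele g n.+1.
  rewrite gN expr0n /= subr0 in P2.
  rewrite -P2.
  rewrite (_ : \sum_(0 <= k < n.+1) _ = \sum_(0 <= k < n.+1) g k * (- vv R v k * g k + g k.+1) +
     \sum_(0 <= k < n.+1) g k * (if k is k'.+1 then g k' else 0)); last first.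
    by rewrite -big_split; apply: eq_bigr => k _; rewrite mulrDr.
  rewrite P1.
  rewrite -!big_split /= -sumrN; apply: eq_bigr => k _; ring.
have S1 : 0 <= \sum_(0 <= k < n.+1) (vv R v k - 2) * g k ^+ 2.
  apply: sumr_ge0 => k _; apply: mulr_ge0; last exact: sqr_ge0.
  rewrite subr_ge0 /vv; have := hv (inord k); rewrite -(ler_int R); done.
have S2 : 0 <= \sum_(0 <= k < n.+1) (g k - g k.+1) ^+ 2.
  by apply: sumr_ge0 => k _; exact: sqr_ge0.
have S0 := sqr_ge0 (g 0%N).
rewrite E oppr_lt0 lt_neqAle.
apply/andP; split; last by lra.
apply/negP => /eqP H0.
have g0 : g 0%N ^+ 2 = 0 by lra.
have S2' : \sum_(0 <= k < n.+1) (g k - g k.+1) ^+ 2 = 0 by lra.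
rewrite big_mkord in S2'.
have T := psumr_eq0P (fun (k : 'I_n.+1) (_ : true) => sqr_ge0 (g k - g k.+1)) S2'.
have A : forall k, (k <= n.+1)%N -> g k = 0.
  elim=> [|k IH] hk; first by move/eqP: g0; rewrite sqrf_eq0 => /eqP.
  have hk' : (k < n.+1)%N by lia.
  have := T (Ordinal hk') isT; move/eqP; rewrite sqrf_eq0 subr_eq0 /= => /eqP <-.
  by apply: IH; lia.
move/eqP: nz; apply; apply/matrixP => i j; rewrite (ord1 j) !mxE.
have := A i (ltnW (ltn_ord i)); by rewrite /g /zz ltn_ord inord_val.
Qed.

Lemma trQ (R : ringType) n (v : 'I_n -> int) : (tridiagQ R v)^T = tridiagQ R v.
Proof. by apply/matrixP => i j; rewrite !mxE orbC; case: eqVneq => // ->. Qed.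

Lemma Qunit (R : realFieldType) n (v : 'I_n.+1 -> int)
  (hv : forall i, 2 <= v i) : tridiagQ R v \in unitmx.
Proof.
rewrite unitmxE unitfE; apply/negP => /det0P [u u0 uQ].
have un : u^T != 0.
  by apply: contra u0 => /eqP h; rewrite -[u]trmxK h trmx0.
have := qform_neg hv un.
by rewrite trmxK uQ mul0mx mxE ltxx.
Qed.

Lemma Zsign (R : realFieldType) n (v : 'I_n.+1 -> int)
  (hv : forall i, 2 <= v i) (z : 'cV[R]_n.+1) :
  (forall i, 0 <= (tridiagQ R v *m z) i ord0) -> forall i, z i ord0 <= 0.
Proof.
move=> hz.
pose p := \col_i (if z i ord0 <= 0 then 0 else z i ord0).
suff p0 : p = 0.
  move=> i; have := congr1 (fun M : 'cV[R]_n.+1 => M i ord0) p0; rewrite !mxE.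
  case: ifP => // /negbT; rewrite -ltNge => h e; by rewrite e ltxx in h.
apply/eqP; apply: contraT => pn.
have N := qform_neg hv pn.
pose m := z - p.
have zE : z = p + m by rewrite /m addrC subrK.
have A : 0 <= (p^T *m tridiagQ R v *m z) ord0 ord0.
  rewrite -mulmxA mxE; apply: sumr_ge0 => i _; rewrite mxE; apply: mulr_ge0 => //.
  rewrite !mxE; case: ifP => // /negbT; rewrite -ltNge => /ltW //.
have B : (p^T *m tridiagQ R v *m m) ord0 ord0 <= 0.
  rewrite bil_expand; apply: sumr_le0 => i _; apply: sumr_le0 => j _.
  rewrite /m !mxE.
  case: (eqVneq i j) => [<-|ne].
    by case: ifP => h; [rewrite !mul0r | rewrite subrr mulr0].
  have Q0 : 0 <= (if (j == i.+1 :> nat) || (i == j.+1 :> nat) then 1 else 0 : R).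
    by case: ifP.
  have p_ge0 : 0 <= (if z i ord0 <= 0 then 0 else z i ord0).
    case: ifP => // /negbT; rewrite -ltNge => /ltW //.
  have m_le0 : z j ord0 - (if z j ord0 <= 0 then 0 else z j ord0) <= 0.
    by case: ifP => h; rewrite ?subr0 ?subrr.
  apply: mulr_ge0_le0 => //; exact: mulr_ge0.
have A2 : (p^T *m tridiagQ R v *m z) ord0 ord0 =
   (p^T *m tridiagQ R v *m p) ord0 ord0 + (p^T *m tridiagQ R v *m m) ord0 ord0.
  by rewrite {1}zE mulmxDr mxE.
lra.
Qed.

Lemma Msign (R : realFieldType) n (v : 'I_n.+1 -> int)
  (hv : forall i, 2 <= v i) i j : invmx (tridiagQ R v) i j <= 0.
Proof.
have := @Zsign R n v hv (col j (invmx (tridiagQ R v))) _ i.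
rewrite mxE; apply => k.
by rewrite colE mulmxA mulmxV ?Qunit // mul1mx mxE ler0n.
Qed.

Lemma Mdef (R : realFieldType) n (v : 'I_n.+1 -> int)
  (hv : forall i, 2 <= v i) (d : 'cV[R]_n.+1) :
  d != 0 -> (d^T *m invmx (tridiagQ R v) *m d) ord0 ord0 < 0.
Proof.
move=> dn.
set z := invmx (tridiagQ R v) *m d.
have Qz : tridiagQ R v *m z = d by rewrite /z mulmxA mulmxV ?Qunit // mul1mx.
have zn : z != 0 by apply: contra dn => /eqP z0; rewrite -Qz z0 mulmx0.
have -> : d^T *m invmx (tridiagQ R v) *m d = z^T *m tridiagQ R v *m z.
  by rewrite -{1}Qz trmx_mul trQ -!mulmxA.
exact: qform_neg.
Qed.

Theorem proposition3p3 (R : realFieldType) (n : nat) (v : 'I_n -> int)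
  (hv : forall i, 2 <= v i) (x : 'cV[R]_n)
  (hle : forall i, `|x i ord0| <= `|yvec R v i ord0|)
  (hlt : exists i0, `|x i0 ord0| < `|yvec R v i0 ord0|) :
  quadf v x > quadf v (yvec R v).
Proof.
case: n v hv x hle hlt => [|n] v hv x hle hlt.
  by case: hlt => [[]].
rewrite /quadf !bil_expand.
set M := invmx (tridiagQ R v).
set y := yvec R v.
have Ms : forall i j, M i j <= 0 by move=> i j; exact: Msign.
have hy : forall i, y i ord0 <= 0.
  move=> i; rewrite /y /yvec mxE; have := hv i; rewrite -(ler_int R) => h; lra.
pose dv := \col_i (`|y i ord0| - `|x i ord0|).
have dn : dv != 0.
  apply/negP => /eqP h; case: hlt => i0 h0.
  have := congr1 (fun N : 'cV[R]_n.+1 => N i0 ord0) h; rewrite !mxE => e.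
  by move: h0; rewrite -subr_gt0 /y /yvec mxE e ltxx.
have hD := Mdef hv dn; rewrite bil_expand -/M in hD.
have S1 : \sum_i \sum_j `|x i ord0| * M i j * `|x j ord0| <=
          \sum_i \sum_j x i ord0 * M i j * x j ord0.
  apply: ler_sum => i _; apply: ler_sum => j _.
  have h1 : x i ord0 * x j ord0 <= `|x i ord0| * `|x j ord0|.
    by rewrite -normrM ler_norm.
  have := Ms i j; nra.
have S2 : \sum_i \sum_j y i ord0 * M i j * y j ord0 =
          \sum_i \sum_j `|y i ord0| * M i j * `|y j ord0|.
  apply: eq_bigr => i _; apply: eq_bigr => j _.
  rewrite !ler0_norm ?hy //; ring.
have S3 : \sum_i \sum_j `|y i ord0| * M i j * `|y j ord0| =
   \sum_i \sum_j dv i ord0 * M i j * dv j ord0 +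
   \sum_i \sum_j (dv i ord0 * M i j * `|x j ord0| + `|x i ord0| * M i j * dv j ord0
                  + `|x i ord0| * M i j * `|x j ord0|).
  rewrite -big_split; apply: eq_bigr => i _; rewrite -big_split; apply: eq_bigr => j _.
  rewrite /dv !mxE /=; ring.
have S4 : \sum_i \sum_j (dv i ord0 * M i j * `|x j ord0| + `|x i ord0| * M i j * dv j ord0
                  + `|x i ord0| * M i j * `|x j ord0|) <=
          \sum_i \sum_j `|x i ord0| * M i j * `|x j ord0|.
  apply: ler_sum => i _; apply: ler_sum => j _.
  have di : 0 <= dv i ord0 by rewrite mxE subr_ge0.
  have dj : 0 <= dv j ord0 by rewrite mxE subr_ge0.
  have ai := normr_ge0 (x i ord0).
  have aj := normr_ge0 (x j ord0).
  have p1 := mulr_ge0_le0 (mulr_ge0 di aj) (Ms i j).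
  have p2 := mulr_ge0_le0 (mulr_ge0 ai dj) (Ms i j).
  nra.
rewrite S2; lra.
Qed.
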